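(* Let $T$ be a tree and let $u$ be a support vertex of $T$ such that $|N(u)\setminus L_u|=1$. Let $T'=T-(L_u\cup\{u\})$. Then $\gamma^{DLD}(T')=\gamma^{DLD}(T)-|L_u|$.
   Context: For a vertex $u$, $N(u)$ is its set of neighbours and $N[u]=N(u)\cup\{u\}$. A code in a graph with vertex set $V$ is a non-empty subset $C\subseteq V$; $I(C;u)=N[u]\cap C$. A code $C$ is solid-locating-dominating if $I(C;u)\ne\emptyset$ for every $u\in V\setminus C$ and $I(C;u)\not\subseteq I(C;v)$ for all distinct $u,v\in V\setminus C$; $\gamma^{DLD}$ denotes the minimum size of such a code. A leaf is a vertex of degree one; a support vertex is a vertex adjacent to at least one leaf; for a support vertex $u$, $L_u$ is the set of leaves adjacent to $u$. $T-X$ denotes the subgraph induced by $V(T)\setminus X$. *)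

(* Defs.v *)
(* A (simple) graph is given by a symmetric irreflexive
   relation e on a finite type T together with a vertex set V : {set T};
   the graph is the subgraph of e induced by V.  This lets us speak of
   induced subgraphs T - X as (e, V :\: X). *)
From mathcomp Require Import all_boot.
Set Implicit Arguments. Unset Strict Implicit. Unset Printing Implicit Defensive.

Section Graphs.
Variable T : finType.
Variable e : rel T.

Definition nbhd (V : {set T}) (u : T) : {set T} := [set v in V | e u v].
Definition cnbhd (V : {set T}) (u : T) : {set T} := u |: nbhd V u.
Definition Icode (V : {set T}) (C : {set T}) (u : T) : {set T} :=
  cnbhd V u :&: C.

Definition is_DLD (V C : {set T}) : bool :=
  [&& C != set0, C \subset V,
      [forall u in V :\: C, Icode V C u != set0] &
      [forall u in V :\: C, forall v in V :\: C,
          (u != v) ==> ~~ (Icode V C u \subset Icode V C v)]].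

(* gamma^DLD : minimum size of a solid-locating-dominating code
   (default #|T|.+1 if there is none, which never happens for a non-empty V) *)
Definition gammaDLD (V : {set T}) : nat :=
  \big[minn/#|T|.+1]_(C : {set T} | is_DLD V C) #|C|.

Definition is_leaf (V : {set T}) (x : T) : bool :=
  (x \in V) && (#|nbhd V x| == 1).

Definition leaves_at (V : {set T}) (u : T) : {set T} :=
  [set x in nbhd V u | is_leaf V x].

Definition is_support (V : {set T}) (u : T) : bool :=
  (u \in V) && (leaves_at V u != set0).

Definition connected_on (V : {set T}) : Prop :=
  forall x y, x \in V -> y \in V ->
    exists p : seq T, [&& path e x p, all (fun z => z \in V) p & last x p == y].

Definition has_cycle (V : {set T}) : Prop :=
  exists (x : T) (p : seq T),
    [&& 2 <= size p, uniq (x :: p), all (fun z => z \in V) (x :: p),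
        path e x p & e (last x p) x].

Definition is_tree (V : {set T}) : Prop :=
  V != set0 /\ connected_on V /\ ~ has_cycle V.

End Graphs.

(* Main.v *)
Require Import Defs.
From mathcomp Require Import all_boot zify.
Set Implicit Arguments. Unset Strict Implicit. Unset Printing Implicit Defensive.

Lemma IcodeE (T : finType) (e : rel T) V C v x :
  (x \in Icode e V C v) = ((x == v) || (x \in V) && e v x) && (x \in C).
Proof. by rewrite /Icode /cnbhd /nbhd !inE. Qed.

Lemma DLDP (T : finType) (e : rel T) V C : is_DLD e V C <->
  [/\ C != set0, C \subset V,
   (forall v, v \in V -> v \notin C -> Icode e V C v != set0) &
   (forall a b, a \in V -> a \notin C -> b \in V -> b \notin C -> a != b ->
      ~~ (Icode e V C a \subset Icode e V C b))].
Proof.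
rewrite /is_DLD; split.
  move=> /and4P [h1 h2 /forall_inP h3 /forall_inP h4]; split => //.
    by move=> v vV vC; apply: h3; rewrite inE vC vV.
  move=> a b aV aC bV bC ab.
  have /forall_inP /(_ b) := h4 a (etrans (in_setD _ _ _) (introT andP (conj aC aV))).
  by rewrite inE bC bV => /(_ isT) /implyP; apply.
move=> [h1 h2 h3 h4]; apply/and4P; split => //.
  by apply/forall_inP => v; rewrite inE => /andP[vC vV]; apply: h3.
apply/forall_inP => a; rewrite inE => /andP[aC aV].
apply/forall_inP => b; rewrite inE => /andP[bC bV].
by apply/implyP; apply: h4.
Qed.

Lemma DLD_add (T : finType) (e : rel T) V C x :
  is_DLD e V C -> x \in V -> is_DLD e V (x |: C).
Proof.
move=> /DLDP [h1 h2 h3 h4] xV; apply/DLDP; split.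
- by apply/set0Pn; exists x; rewrite setU11.
- by rewrite subUset sub1set xV.
- move=> v vV; rewrite in_setU1 negb_or => /andP[_ vC].
  have /set0Pn [y hy] := h3 v vV vC.
  apply/set0Pn; exists y; move: hy; rewrite !IcodeE in_setU1.
  by case/andP => -> ->; rewrite orbT.
- move=> a b aV; rewrite in_setU1 negb_or => /andP[_ aC] bV.
  rewrite in_setU1 negb_or => /andP[_ bC] ab.
  apply: contra (h4 a b aV aC bV bC ab) => /subsetP hs.
  apply/subsetP => y hy; have := hs y.
  move: hy; rewrite !IcodeE !in_setU1 => /andP[-> yC].
  by rewrite yC orbT => /(_ isT) /andP[->].
Qed.

Lemma Icode_sub (T : finType) (e : rel T) (W V C : {set T}) v :
  W \subset V -> C \subset W -> Icode e W C v = Icode e V C v.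
Proof.
move=> /subsetP WV /subsetP CW; apply/setP => x; rewrite !IcodeE.
case xC: (x \in C); rewrite ?andbF ?andbT //.
by rewrite (CW _ xC) (WV _ (CW _ xC)).
Qed.

Lemma DLD_V (T : finType) (e : rel T) V : V != set0 -> is_DLD e V V.
Proof.
move=> V0; apply/DLDP; split => //.
  by move=> v ->.
by move=> a b ->.
Qed.

Lemma big_min_le (T : finType) (P : pred T) (F : T -> nat) d j :
  P j -> \big[minn/d]_(i | P i) F i <= F j.
Proof.
move=> Pj; have : j \in index_enum T by rewrite mem_index_enum.
elim: (index_enum T) => [//|i r IH]; rewrite big_cons inE.
case/orP => [/eqP <-|jr]; first by rewrite Pj geq_minl.
case: (P i); last exact: IH.
exact: leq_trans (geq_minr _ _) (IH jr).
Qed.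

Lemma gamma_le (T : finType) (e : rel T) V C :
  is_DLD e V C -> gammaDLD e V <= #|C|.
Proof. by move=> h; exact: (@big_min_le _ (is_DLD e V) (fun C => #|C|) _ C h). Qed.

Lemma gamma_ex (T : finType) (e : rel T) V : V != set0 ->
  exists C, is_DLD e V C /\ gammaDLD e V = #|C|.
Proof.
move=> V0.
have : gammaDLD e V = #|T|.+1 \/ exists C, is_DLD e V C /\ gammaDLD e V = #|C|.
  rewrite /gammaDLD; apply: (big_ind (fun x => x = #|T|.+1 \/
     exists C, is_DLD e V C /\ x = #|C|)); first by left.
    move=> x y hx hy; rewrite /minn; by case: ifP.
  by move=> C hC; right; exists C.
case => // hg; have := gamma_le (DLD_V e V0); rewrite hg.
by have := max_card V; lia.
Qed.
Theorem mainTheorem12 (T : finType) (e : rel T)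
  (e_sym : symmetric e) (e_irr : irreflexive e)
  (V : {set T}) (u : T) :
  is_tree e V ->
  is_support e V u ->
  #|nbhd e V u :\: leaves_at e V u| = 1 ->
  gammaDLD e (V :\: (u |: leaves_at e V u)) + #|leaves_at e V u| = gammaDLD e V.
Proof.
move=> [V0 _] /andP [uV L0] /eqP /cards1P [w hw].
set L := leaves_at e V u in L0 hw *.
set V' := V :\: (u |: L).
have Lleaf : forall l, l \in L -> [/\ l \in V, e u l & nbhd e V l = [set u]].
  move=> l; rewrite /L /leaves_at inE => /andP [lN /andP [lV /cards1P [z hz]]].
  move: lN; rewrite /nbhd inE => /andP [_ eul]; split => //.
  have : u \in [set v in V | e l v] by rewrite inE uV e_sym.
  by rewrite /nbhd in hz; rewrite hz inE => /eqP ->.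
clearbody L.
have wN : w \in nbhd e V u :\: L by rewrite hw set11.
move: wN; rewrite in_setD /nbhd inE => /andP [wL /andP [wV euw]].
have uL : u \notin L by apply/negP => /Lleaf [_ ]; rewrite e_irr.
have LV : L \subset V by apply/subsetP => l /Lleaf [].
have V'V : V' \subset V by apply: subsetDl.
have inV' : forall v, (v \in V') = (v \in V) && (v != u) && (v \notin L).
  by move=> v; rewrite /V' in_setD in_setU1 negb_or; case: (v \in V); case: (v == u); case: (v \in L).
have wu : w != u by apply/eqP => ewu; move: euw; rewrite ewu e_irr.
have wV' : w \in V' by rewrite inV' wV wu.
have uV' : u \notin V' by rewrite inV' eqxx andbF.
have LV'0 : forall l, l \in L -> l \notin V' by move=> l lL; rewrite inV' lL !andbF.
have adjU : forall v, v \in V' -> e v u -> v = w.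
  move=> v; rewrite inV' => /andP [/andP [vV _] vL] evu.
  have : v \in nbhd e V u :\: L by rewrite in_setD vL /nbhd inE vV e_sym.
  by rewrite hw inE => /eqP.
have adjL : forall v l, v \in V' -> l \in L -> e v l = false.
  move=> v l vV' lL; apply/negP => evl; case: (Lleaf l lL) => _ _ hl.
  have : v \in nbhd e V l by rewrite /nbhd inE e_sym evl (subsetP V'V _ vV').
  by rewrite hl inE => /eqP evu; move: vV'; rewrite evu (negbTE uV').
have Itr : forall (D : {set T}) v, v \in V' -> (u \notin D) || ~~ e v u ->
    Icode e V D v = Icode e V' (D :&: V') v.
  move=> D v vV' hc; rewrite (@Icode_sub _ e V' V) ?subsetIr //.
  apply/setP => x; rewrite !IcodeE inE.
  case xD: (x \in D); rewrite ?andbF //= !andbT.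
  case/boolP: (x == v) => [/eqP -> //| _] /=.
  case xV: (x \in V) => //=; case exv: (e v x) => //=.
  rewrite inV' xV /=; symmetry; apply/andP; split.
    apply/eqP => exu; move: hc; rewrite -exu xD exv //.
  by apply/negP => xL; move: exv; rewrite adjL.
have Ileaf : forall (C : {set T}) l, l \in L -> l \notin C -> Icode e V C l = [set u] :&: C.
  move=> C l lL lC; apply/setP => x; rewrite IcodeE !inE.
  case: (Lleaf l lL) => _ _ hl.
  have -> : (x \in V) && e l x = (x == u) by rewrite -(in_set1 x u) -hl /nbhd inE.
  by case: (eqVneq x l) => [->|]; rewrite ?(negbTE lC) ?andbF.
have miss_u : forall (C : {set T}) l, is_DLD e V C -> l \in L -> l \notin C -> u \in C.
  move=> C l /DLDP [_ _ h3 _] lL lC.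
  have /set0Pn [x] := h3 l (subsetP LV _ lL) lC.
  by rewrite Ileaf // !inE => /andP [/eqP -> ].
have miss_w : forall (C : {set T}) l, is_DLD e V C -> l \in L -> l \notin C -> w \in C.
  move=> C l hC lL lC; have uC := miss_u C l hC lL lC.
  move: hC => /DLDP [_ _ _ h4]; apply/negPn/negP => wC.
  have lw : l != w by apply: contraNneq wL => <-.
  have := h4 l w (subsetP LV _ lL) lC wV wC lw.
  rewrite Ileaf //; apply/negP/negPn/subsetP => x; rewrite IcodeE !inE.
  by case/andP => /eqP -> ->; rewrite uV e_sym euw orbT.
have miss1 : forall (C : {set T}) l1 l2, is_DLD e V C -> l1 \in L -> l1 \notin C ->
    l2 \in L -> l2 \notin C -> l1 = l2.
  move=> C l1 l2 /DLDP [_ _ _ h4] l1L l1C l2L l2C; apply/eqP/negPn/negP => ne.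
  have := h4 l1 l2 (subsetP LV _ l1L) l1C (subsetP LV _ l2L) l2C ne.
  by rewrite !Ileaf // subxx.
apply/eqP; rewrite eqn_leq; apply/andP; split.
- have [C [hC gC]] := gamma_ex e V0; rewrite gC.
  set D := if u \in C then w |: C else C.
  have hD : is_DLD e V D by rewrite /D; case: ifP => // _; apply: DLD_add.
  have uDw : u \in D -> w \in D.
    by rewrite /D; case: ifP => uC; rewrite ?setU11 // uC.
  have hc : forall v, v \in V' -> v \notin D -> (u \notin D) || ~~ e v u.
    move=> v vV' vD; case/boolP: (e v u) => evu; rewrite ?orbT //.
    rewrite orbF; apply: contra vD => /uDw; by rewrite (adjU v vV' evu).
  have hD' : is_DLD e V' (D :&: V').
    move: (hD) => /DLDP [h1 h2 h3 h4]; apply/DLDP; split.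
    + case/boolP: (w \in D) => wD.
        by apply/set0Pn; exists w; rewrite inE wD wV'.
      have /set0Pn [x hx] := h3 w wV wD.
      move: hx; rewrite (Itr D w wV' (hc w wV' wD)).
      by move=> hx; apply/set0Pn; exists x; move: hx; rewrite IcodeE => /andP [_ ->].
    + exact: subsetIr.
    + move=> v vV'; rewrite inE vV' andbT => vD.
      by rewrite -Itr ?hc //; apply: h3 => //; apply: (subsetP V'V).
    + move=> a b aV'; rewrite inE aV' andbT => aD bV'; rewrite inE bV' andbT => bD ab.
      by rewrite -!Itr ?hc //; apply: h4 => //; apply: (subsetP V'V).
  apply: (leq_trans (leq_add (gamma_le hD') (leqnn _))).
  have DV : D \subset V by move: hD => /DLDP [].
  have eq1 : #|D :&: V'| + #|D :&: (u |: L)| = #|D|.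
    rewrite -(cardsID (u |: L) D) addnC; congr (_ + _).
    apply: eq_card => x; rewrite in_setI inV' in_setD in_setU1.
    case xD: (x \in D); rewrite ?andbF //= (subsetP DV _ xD) /=.
    by case: (x == u); case: (x \in L).
  suff : #|L| + #|D| <= #|C| + #|D :&: (u |: L)|.
    by move: eq1; clear; clear; lia.
  rewrite /D; case: ifP => uC.
  + case/boolP: (L \subset C) => LC.
      have ss : u |: L \subset (w |: C) :&: (u |: L).
        by rewrite subsetI subxx andbT subUset sub1set !inE uC orbT /= subsetU // LC orbT.
      have := subset_leq_card ss; rewrite cardsU1 uL cardsU1.
      by case: (w \in C); simpl; clear; lia.
    move: LC => /subsetPn [l lL lC].
    have wC := miss_w C l hC lL lC.
    have -> : w |: C = C by apply/setUidPr; rewrite sub1set.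
    have ss : u |: (L :\ l) \subset C :&: (u |: L).
      rewrite subsetI subUset sub1set uC /=; apply/andP; split.
        apply/subsetP => x; rewrite in_setD1 => /andP [xl xL].
        by apply/negPn/negP => xC; move: xl; rewrite (miss1 C x l hC xL xC lL lC) eqxx.
      by rewrite subUset sub1set setU11 /= subsetU // subD1set orbT.
    have := subset_leq_card ss; rewrite cardsU1 in_setD1 (negbTE uL) andbF /=.
    by rewrite (cardsD1 l L) lL; clear; lia.
  + have LC : L \subset C.
      by apply/subsetP => l lL; apply/negPn/negP => lC; move: uC; rewrite (miss_u C l hC lL lC).
    have ss : L \subset C :&: (u |: L) by rewrite subsetI LC subsetU // subxx orbT.
    by have := subset_leq_card ss; clear; lia.
- have V'0 : V' != set0 by apply/set0Pn; exists w.
  have [C' [hC' gC']] := gamma_ex e V'0; rewrite gC'.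
  move: (hC') => /DLDP [h1 h2 h3 h4].
  have C'L : forall x, x \in C' -> x \in L = false.
    by move=> x /(subsetP h2) xV'; apply/negP => xL; move: xV'; rewrite (negbTE (LV'0 x xL)).
  have C'u : u \notin C' by apply: contra uV' => /(subsetP h2).
  have IcV' : forall v x, x \in Icode e V' C' v -> x \in V'.
    by move=> v x; rewrite IcodeE => /andP [_ /(subsetP h2)].
  case/boolP: (w \in C') => wC'.
  + case/set0Pn: L0 => l lL.
    set C := u |: (C' :|: (L :\ l)).
    have CV' : C :&: V' = C'.
      apply/setP => x; rewrite in_setI in_setU1 in_setU in_setD1.
      case xC': (x \in C'); first by rewrite orbT (subsetP h2 _ xC').
      rewrite /=; case: eqP => [->|_]; first by rewrite (negbTE uV') andbF.
      case xL: (x \in L); last by rewrite andbF.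
      by rewrite (negbTE (LV'0 x xL)) !andbF.
    have nc : forall v, v \in V -> v \notin C -> v = l \/ (v \in V' /\ v \notin C').
      move=> v vV; rewrite in_setU1 in_setU in_setD1 !negb_or => /and3P [vu vC' /nandP [/negPn /eqP -> | vL]]; first by left.
      by right; split => //; rewrite inV' vV vu vL.
    have Ie : forall v, v \in V' -> v \notin C' -> Icode e V C v = Icode e V' C' v.
      move=> v vV' vC'; rewrite (Itr C v vV') ?CV' //.
      apply/orP; right; apply/negP => evu; move: vC'; rewrite (adjU v vV' evu) wC'.
      done.
    have lC : l \notin C.
      rewrite in_setU1 in_setU in_setD1 eqxx /= orbF negb_or; apply/andP; split.
        by apply/negP => /eqP elu; move: uL; rewrite -elu lL.
      by apply: contra (LV'0 l lL) => /(subsetP h2).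
    have Il : Icode e V C l = [set u] by rewrite Ileaf // ; apply/setIidPl; rewrite sub1set setU11.
    have hC : is_DLD e V C.
      apply/DLDP; split.
      * by apply/set0Pn; exists u; rewrite setU11.
      * rewrite subUset sub1set uV subUset (subset_trans h2 V'V) /=.
        exact: subset_trans (subsetDl _ _) LV.
      * move=> v vV vC; case: (nc v vV vC) => [->|[vV' vC']]; first by rewrite Il; apply/set0Pn; exists u; rewrite set11.
        by rewrite Ie //; apply: h3.
      * move=> a b aV aC bV bC ab.
        case: (nc a aV aC) => [ea|[aV' aC']]; case: (nc b bV bC) => [eb|[bV' bC']].
        - by move: ab; rewrite ea eb eqxx.
        - rewrite ea Il Ie // sub1set; apply/negP => /IcV'; by rewrite (negbTE uV').
        - rewrite eb Il Ie //; apply/negP => hs.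
          have /set0Pn [x hx] := h3 a aV' aC'.
          have := subsetP hs x hx; rewrite inE => /eqP exu.
          by move: (IcV' _ _ hx); rewrite exu (negbTE uV').
        - by rewrite !Ie //; apply: h4.
    apply: (leq_trans (gamma_le hC)).
    rewrite cardsU1 in_setU in_setD1 (negbTE C'u) (negbTE uL) andbF /= cardsU.
    have -> : C' :&: (L :\ l) = set0.
      by apply/setP => x; rewrite in_setI in_setD1 in_set0; case xC': (x \in C'); rewrite //= (C'L x) ?xC' // andbF.
    by rewrite cards0 subn0 (cardsD1 l L) lL; clear; lia.
  + set C := C' :|: L.
    have CV' : C :&: V' = C'.
      apply/setP => x; rewrite in_setI in_setU; case xC': (x \in C').
        by rewrite (subsetP h2 _ xC').
      by case xL: (x \in L); rewrite //= (negbTE (LV'0 x xL)).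
    have uC : u \notin C by rewrite in_setU negb_or C'u uL.
    have nc : forall v, v \in V -> v \notin C -> v = u \/ (v \in V' /\ v \notin C').
      move=> v vV; rewrite in_setU negb_or => /andP [vC' vL].
      case: (eqVneq v u) => vu; first by left.
      by right; split => //; rewrite inV' vV vu vL.
    have Ie : forall v, v \in V' -> v \notin C' -> Icode e V C v = Icode e V' C' v.
      by move=> v vV' vC'; rewrite (Itr C v vV') ?CV' ?uC.
    have lIu : forall l, l \in L -> l \in Icode e V C u.
      by move=> l lL; rewrite IcodeE in_setU lL orbT andbT; case: (Lleaf l lL) => -> -> _; rewrite orbT.
    have hC : is_DLD e V C.
      apply/DLDP; split.
      * by apply/set0Pn; case/set0Pn: L0 => l lL; exists l; rewrite in_setU lL orbT.
      * by rewrite subUset LV (subset_trans h2 V'V).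
      * move=> v vV vC; case: (nc v vV vC) => [->|[vV' vC']].
          by case/set0Pn: L0 => l lL; apply/set0Pn; exists l; apply: lIu.
        by rewrite Ie //; apply: h3.
      * move=> a b aV aC bV bC ab.
        case: (nc a aV aC) => [ea|[aV' aC']]; case: (nc b bV bC) => [eb|[bV' bC']].
        - by move: ab; rewrite ea eb eqxx.
        - rewrite ea (Ie b) //; case/set0Pn: L0 => l lL; apply/negP => /subsetP /(_ l (lIu l lL)).
          by move/IcV'; rewrite (negbTE (LV'0 l lL)).
        - rewrite eb (Ie a) //; apply/negP => hs.
          have /set0Pn [x hx] := h3 a aV' aC'.
          have xV' := IcV' _ _ hx.
          have := subsetP hs x hx; rewrite IcodeE => /andP [/orP [/eqP exu | /andP [_ eux]] _].
            by move: xV'; rewrite exu (negbTE uV').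
          have exw : x = w by apply: (adjU x xV'); rewrite e_sym.
          by move: hx; rewrite IcodeE exw (negbTE wC') andbF.
        - by rewrite !Ie //; apply: h4.
    apply: (leq_trans (gamma_le hC)).
    rewrite cardsU.
    have -> : C' :&: L = set0.
      by apply/setP => x; rewrite in_setI in_set0; case xC': (x \in C'); rewrite //= (C'L x) ?xC'.
    by rewrite cards0 subn0.
Qed.
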